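(* Let $I$ be a set, $\mathcal{E}=(E_i)_{i\in I}$ a family of nonempty sets, $R,S$ multiple relations in $\mathcal{E}$, and $L\subseteq I$ with $J_R\cap J_S\subseteq L\subseteq J_R\cup J_S$. Then $(R\bowtie S)_{|L}=R_{|L\cap J_R}\bowtie S_{|L\cap J_S}$. In particular, if $J_R\cap J_S=\emptyset$ this holds for every $L\subseteq J_R\cup J_S$.
   Context: For $J\subseteq I$, $Z_J=\prod_{j\in J}E_j$ ($Z_\emptyset=\{\bullet\}$). A multiple relation is $R=(J_R,G_R)$ with $J_R\subseteq I$, $G_R\subseteq Z_{J_R}$; $R_{|K}=(K,\{x_{|K}:x\in G_R\})$ for $K\subseteq J_R$; $R\bowtie S=(J_R\cup J_S,\{x\in Z_{J_R\cup J_S}: x_{|J_R}\in G_R,\ x_{|J_S}\in G_S\})$. *)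

(* Defs.v *)
Set Implicit Arguments.

Section MultipleRelations.
Variables (I : Type) (E : I -> Type).

Definition Z (J : I -> Prop) : Type := forall j : {i | J i}, E (proj1_sig j).

Definition restrZ (J K : I -> Prop) (h : forall i, K i -> J i) (x : Z J) : Z K :=
  fun k => x (exist J (proj1_sig k) (h _ (proj2_sig k))).

Record mrel := MRel { J_ : I -> Prop ; G_ : Z J_ -> Prop }.

Definition restr (R : mrel) (K : I -> Prop) (h : forall i, K i -> J_ R i) : mrel :=
  @MRel K (fun y => exists x, G_ R x /\ @restrZ (J_ R) K h x = y).

Definition unionJ (R S : mrel) : I -> Prop := fun i => J_ R i \/ J_ S i.

Definition join (R S : mrel) : mrel :=
  @MRel (unionJ R S)
    (fun x => G_ R (@restrZ (unionJ R S) (J_ R) (fun i (hi : J_ R i) => or_introl hi) x)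
           /\ G_ S (@restrZ (unionJ R S) (J_ S) (fun i (hi : J_ S i) => or_intror hi) x)).

Definition interL (L J : I -> Prop) : I -> Prop := fun i => L i /\ J i.

Definition interL_incl (L J : I -> Prop) : forall i, interL L J i -> J i :=
  fun i h => proj2 h.

End MultipleRelations.

(* Main.v *)
Require Import Defs.
From Stdlib Require Import FunctionalExtensionality PropExtensionality ProofIrrelevance ClassicalEpsilon.

Ltac pi := simpl; match goal with |- ?f (exist ?P ?i ?p) = ?f (exist _ ?i ?q) =>
  let T := type of (f (exist P i p)) in let T := eval simpl in T in exact (f_equal (fun z => (f (exist P i z) : T)) (proof_irrelevance _ p q)) end.

Lemma restrZ_id (I : Type) (E : I -> Type) (J : I -> Prop) (h : forall i, J i -> J i) (x : Z E J) :
  @restrZ I E J J h x = x.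
Proof.
  apply functional_extensionality_dep; intros [i p]; unfold restrZ; simpl.
  pi.
Qed.

Lemma restrZ_pi (I : Type) (E : I -> Type) (J K : I -> Prop) (h h' : forall i, K i -> J i) (x : Z E J) :
  @restrZ I E J K h x = @restrZ I E J K h' x.
Proof. f_equal; apply proof_irrelevance. Qed.

Lemma mrel_eq (I : Type) (E : I -> Type) (J1 J2 : I -> Prop) (G1 : Z E J1 -> Prop) (G2 : Z E J2 -> Prop)
  (e : forall i, J1 i <-> J2 i) (h : forall i, J2 i -> J1 i) :
  (forall x, G1 x <-> G2 (@restrZ I E J1 J2 h x)) -> MRel G1 = MRel G2.
Proof.
  intros HG.
  assert (ee : J1 = J2) by (apply functional_extensionality; intro i; apply propositional_extensionality; apply e).
  subst J2. f_equal. apply functional_extensionality; intro x.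
  apply propositional_extensionality. rewrite (HG x), restrZ_id. tauto.
Qed.

Lemma core (I : Type) (E : I -> Type) (R S : mrel E) (L : I -> Prop)
     (hL1 : forall i, J_ R i /\ J_ S i -> L i)
     (hL2 : forall i, L i -> unionJ R S i) :
     restr (join R S) L hL2
     = join (restr R (interL L (J_ R)) (@interL_incl I L (J_ R)))
            (restr S (interL L (J_ S)) (@interL_incl I L (J_ S))).
Proof.
  unshelve eapply mrel_eq.
  - intros i [[p _]|[p _]]; exact p.
  - intro i; unfold unionJ, interL; simpl; split.
    + intro p; destruct (hL2 i p); tauto.
    + tauto.
  - intro x; simpl; split.
    + intros [y [[HR HS] Hy]]; subst x; split.
      * exists (@restrZ I E (unionJ R S) (J_ R) (fun i (hi : J_ R i) => or_introl hi) y); split; [exact HR|].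
        apply functional_extensionality_dep; intros [i q]; unfold restrZ; pi.
      * exists (@restrZ I E (unionJ R S) (J_ S) (fun i (hi : J_ S i) => or_intror hi) y); split; [exact HS|].
        apply functional_extensionality_dep; intros [i q]; unfold restrZ; pi.
    + intros [[a [Ha Hax]] [b [Hb Hbx]]].
      assert (Hnr : forall i, unionJ R S i -> ~ J_ R i -> J_ S i)
        by (intros i [u|u] n; [contradiction|exact u]).
      set (y := (fun k : {i | unionJ R S i} =>
        match excluded_middle_informative (L (proj1_sig k)) with
        | left p => x (exist L (proj1_sig k) p)
        | right _ => match excluded_middle_informative (J_ R (proj1_sig k)) with
                     | left q => a (exist _ (proj1_sig k) q)
                     | right nq => b (exist _ (proj1_sig k) (Hnr _ (proj2_sig k) nq))
                     end
        end) : Z E (unionJ R S)).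
      exists y; split; [split|].
      * replace (restrZ _ _ y) with a; [exact Ha|].
        apply functional_extensionality_dep; intros [i q]; unfold restrZ, y; simpl.
        destruct (excluded_middle_informative (L i)) as [p|np].
        -- pose proof (f_equal (fun f => f (exist _ i (conj p q))) Hax) as H; simpl in H.
           unfold restrZ in H; simpl in H. refine (eq_trans _ (eq_trans H _)); pi.
        -- destruct (excluded_middle_informative (J_ R i)) as [q'|nq]; [|contradiction].
           pi.
      * replace (restrZ _ _ y) with b; [exact Hb|].
        apply functional_extensionality_dep; intros [i q]; unfold restrZ, y; simpl.
        destruct (excluded_middle_informative (L i)) as [p|np].
        -- pose proof (f_equal (fun f => f (exist _ i (conj p q))) Hbx) as H; simpl in H.
           unfold restrZ in H; simpl in H. refine (eq_trans _ (eq_trans H _)); pi.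
        -- destruct (excluded_middle_informative (J_ R i)) as [q'|nq].
           ++ exfalso; apply np, hL1; tauto.
           ++ pi.
      * apply functional_extensionality_dep; intros [i p]; unfold restrZ, y; simpl.
        destruct (excluded_middle_informative (L i)) as [p'|np]; [|contradiction].
        pi.
Qed.

Theorem mainTheorem11 (I : Type) (E : I -> Type)
  (hE : forall i, inhabited (E i)) (R S : mrel E) :
  (forall (L : I -> Prop)
     (hL1 : forall i, J_ R i /\ J_ S i -> L i)
     (hL2 : forall i, L i -> unionJ R S i),
     restr (join R S) L hL2
     = join (restr R (interL L (J_ R)) (@interL_incl I L (J_ R)))
            (restr S (interL L (J_ S)) (@interL_incl I L (J_ S))))
  /\
  ((forall i, ~ (J_ R i /\ J_ S i)) ->
   forall (L : I -> Prop) (hL2 : forall i, L i -> unionJ R S i),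
     restr (join R S) L hL2
     = join (restr R (interL L (J_ R)) (@interL_incl I L (J_ R)))
            (restr S (interL L (J_ S)) (@interL_incl I L (J_ S)))).
Proof.
  split.
  - intros L hL1 hL2; apply core; exact hL1.
  - intros Hd L hL2; apply core; intros i Hi; exfalso; exact (Hd i Hi).
Qed.
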